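(* For the log-loss $\ell_{\log}(\mathrm{h},(x,y))=-\log\mathrm{h}(y|x)$ and training instances $x_1,\dots,x_n$, the problem $\mathscr{P}_{x,\ell_{\log}}^{\mathbf{a},\mathbf{b}}$ is equivalent to $$\mathscr{P}_{x,\log}^{\mathbf{a},\mathbf{b}}:\ \min_{\boldsymbol{\mu},\boldsymbol{\eta}}\ \tfrac{1}{2}(\mathbf{b}-\mathbf{a})^{\mathrm{T}}\boldsymbol{\eta}-\tfrac{1}{2}(\mathbf{b}+\mathbf{a})^{\mathrm{T}}\boldsymbol{\mu}-\frac{1}{n}\sum_{i=1}^n\varphi_{\log}(\boldsymbol{\mu},x_i)\ \text{ s.t. }\boldsymbol{\eta}+\boldsymbol{\mu}\succeq\mathbf{0},\ \boldsymbol{\eta}-\boldsymbol{\mu}\succeq\mathbf{0},$$ with $\varphi_{\log}(\boldsymbol{\mu},x)=-\log\sum_{y\in\mathcal{Y}}\exp\{\Phi(x,y)^{\mathrm{T}}\boldsymbol{\mu}\}$. In addition, for a solution $\boldsymbol{\mu}^*,\boldsymbol{\eta}^*$ of $\mathscr{P}_{x,\log}^{\mathbf{a},\mathbf{b}}$, the condition $\ell_{\log}(\mathrm{h},(x,y))+\Phi(x,y)^{\mathrm{T}}\boldsymbol{\mu}^*+\varphi_{\ell_{\log}}(\boldsymbol{\mu}^*,x)\leq0$ for all $x,y$ (which makes $\mathrm{h}$ a log-MRC for $\mathcal{U}_x^{\mathbf{a},\mathbf{b}}$) becomes $$\mathrm{h}(y|x)=\exp\{\Phi(x,y)^{\mathrm{T}}\boldsymbol{\mu}^*+\varphi_{\log}(\boldsymbol{\mu}^*,x)\}=\Big(\sum_{i\in\mathcal{Y}}\exp\{(\Phi(x,i)-\Phi(x,y))^{\mathrm{T}}\boldsymbol{\mu}^*\}\Big)^{-1}\quad\forall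 x,y.$$
   Context: Let $\mathcal{X},\mathcal{Y}$ be finite nonempty sets, $\mathcal{Y}=\{1,\dots,|\mathcal{Y}|\}$; $\Delta(\mathcal{Z})$ the probability distributions on a finite set $\mathcal{Z}$. A classification rule $\mathrm{h}$ assigns to each $x$ a distribution $\mathrm{h}(\cdot|x)\in\Delta(\mathcal{Y})$. For a score function $L$ (loss $\ell(\mathrm{h},(x,y))=L(\mathrm{h}(\cdot|x),y)$): $\Phi:\mathcal{X}\times\mathcal{Y}\to\mathbb{R}^m$ is a feature mapping, $\boldsymbol{\Phi}(x,\cdot)$ the $|\mathcal{Y}|\times m$ matrix with rows $\Phi(x,y)^{\mathrm{T}}$, $\mathbf{1}$ the all-ones vector, $\preceq,\succeq$ componentwise, $\mathcal{L}=\{\mathbf{c}\in\mathbb{R}^{|\mathcal{Y}|}:\exists\,\mathrm{q}\in\Delta(\mathcal{Y}),\ \mathbf{c}+(L(\mathrm{q},y))_{y}\preceq\mathbf{0}\}$, $\varphi_\ell(\boldsymbol{\mu},x)=\max\{\nu:\boldsymbol{\Phi}(x,\cdot)\boldsymbol{\mu}+\nu\mathbf{1}\in\mathcal{L}\}$, and $\mathscr{P}_{x,\ell}^{\mathbf{a},\mathbf{b}}$ is $\min_{\boldsymbol{\mu},\boldsymbol{\eta}}\tfrac12(\mathbf{b}-\mathbf{a})^{\mathrm{T}}\boldsymbol{\eta}-\tfrac12(\mathbf{b}+\mathbf{a})^{\mathrm{T}}\boldsymbol{\mu}-\frac1n\sum_{i=1}^n\varphi_\ell(\boldsymbol{\mu},x_i)$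 s.t. $\boldsymbol{\eta}\pm\boldsymbol{\mu}\succeq\mathbf{0}$. With $\mathrm{p}_n$ the empirical distribution of $x_1,\dots,x_n$, $\mathcal{U}_x^{\mathbf{a},\mathbf{b}}=\{\mathrm{p}\in\Delta(\mathcal{X}\times\mathcal{Y}):\mathbf{a}\preceq\mathbb{E}_{\mathrm{p}}\{\Phi\}\preceq\mathbf{b},\ \sum_y\mathrm{p}(x,y)=\mathrm{p}_n(x)\ \forall x\}$, and an $\ell$-MRC for $\mathcal{U}$ minimizes $\max_{\mathrm{p}\in\mathcal{U}}\sum_{x,y}\mathrm{p}(x,y)\ell(\mathrm{h},(x,y))$ over all classification rules. *)

(* Defs.v *)
From HB Require Import structures.
From mathcomp Require Import all_boot all_order all_algebra.
From mathcomp Require Import all_classical all_reals.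
From mathcomp Require Import ereal sequences exp.
Set Implicit Arguments. Unset Strict Implicit. Unset Printing Implicit Defensive.
Import Order.TTheory GRing.Theory Num.Theory.
Local Open Scope ring_scope.

Section MRC.
Variables (R : realType) (X Y : finType) (m : nat).

Definition dotv (u v : 'rV[R]_m) : R := \sum_(j < m) u 0 j * v 0 j.

Definition is_dist (q : Y -> R) : Prop := (forall y, 0 <= q y) /\ \sum_(y : Y) q y = 1.

(* classification rule: h(.|x) \in Delta(Y) for all x ; h x y = h(y|x) *)
Definition is_rule (h : X -> Y -> R) : Prop := forall x, is_dist (h x).

Definition logloss (q : Y -> R) (y : Y) : \bar R :=
  if q y == 0 then +oo%E else (- ln (q y))%:E.

Definition Lset (L : (Y -> R) -> Y -> \bar R) (c : Y -> R) : Prop :=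
  exists q, is_dist q /\ forall y, ((c y)%:E + L q y <= 0)%E.

Definition phi_feas (L : (Y -> R) -> Y -> \bar R) (Phi : X -> Y -> 'rV[R]_m)
  (mu : 'rV[R]_m) (x : X) (nu : R) : Prop :=
  Lset L (fun y => dotv (Phi x y) mu + nu).

Definition is_max (S : R -> Prop) (v : R) : Prop := S v /\ forall w, S w -> w <= v.

Definition is_phi (L : (Y -> R) -> Y -> \bar R) (Phi : X -> Y -> 'rV[R]_m)
  (f : 'rV[R]_m -> X -> R) : Prop :=
  forall mu x, is_max (phi_feas L Phi mu x) (f mu x).

Definition phi_log (Phi : X -> Y -> 'rV[R]_m) (mu : 'rV[R]_m) (x : X) : R :=
  - ln (\sum_(y : Y) expR (dotv (Phi x y) mu)).

Definition objective (n : nat) (xs : 'I_n -> X) (a b : 'rV[R]_m)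
  (phi : 'rV[R]_m -> X -> R) (mu eta : 'rV[R]_m) : R :=
  2^-1 * dotv (b - a) eta - 2^-1 * dotv (b + a) mu
  - n%:R^-1 * \sum_(i < n) phi mu (xs i).

Definition feasible (mu eta : 'rV[R]_m) : Prop :=
  forall j, 0 <= eta 0 j + mu 0 j /\ 0 <= eta 0 j - mu 0 j.

Definition is_solution (n : nat) (xs : 'I_n -> X) (a b : 'rV[R]_m)
  (phi : 'rV[R]_m -> X -> R) (mu eta : 'rV[R]_m) : Prop :=
  feasible mu eta /\
  forall mu' eta', feasible mu' eta' ->
    objective xs a b phi mu eta <= objective xs a b phi mu' eta'.

End MRC.

(* Main.v *)
Require Import Defs.
From HB Require Import structures.
From mathcomp Require Import all_boot all_order all_algebra.
From mathcomp Require Import all_classical all_reals.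
From mathcomp Require Import ereal sequences exp.
From mathcomp Require Import lra.
Import Order.TTheory GRing.Theory Num.Theory.
Local Open Scope ring_scope.

Section H.
Variables (R : realType) (Y : finType).

Lemma pt_char {q : Y -> R} {y} {c : R} : 0 <= q y ->
  ((c%:E + logloss q y <= 0)%E <-> (0 < q y /\ expR c <= q y)).
Proof.
move=> q0; rewrite /logloss; case: eqP => [->|/eqP qn0].
  by split => //; case; rewrite ltxx.
have qp : 0 < q y by rewrite lt_def qn0.
rewrite -EFinD lee_fin; split.
  move=> H; split => //; rewrite -[X in _ <= X]lnK ?posrE // ler_expR.
  lra.
case=> _; rewrite -[X in _ <= X]lnK ?posrE // ler_expR => H.
lra.
Qed.

Lemma Lset_char (c : Y -> R) : (0 < #|Y|)%N ->
  Lset (@logloss R Y) c <-> \sum_y expR (c y) <= 1.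
Proof.
move=> hY; split.
  case=> q [[q0 q1] H]; rewrite -q1; apply: ler_sum => y _.
  by have /(pt_char (q0 y)) [] := H y.
move=> Hs.
set T := \sum_y expR (c y).
have Tp : 0 < T.
  case/card_gt0P: hY => y0 _.
  rewrite /T (bigD1 y0) //= ltr_pwDl ?expR_gt0 //.
  by apply: sumr_ge0 => i _; exact: expR_ge0.
exists (fun y => expR (c y) / T); split.
  split; first by move=> y; rewrite divr_ge0 ?expR_ge0 ?ltW.
  by rewrite -mulr_suml divff // gt_eqF.
move=> y; apply/pt_char; first by rewrite divr_ge0 ?expR_ge0 ?ltW.
split; first by rewrite divr_gt0 ?expR_gt0.
by rewrite ler_pdivlMr // ler_piMr ?expR_ge0.
Qed.


Lemma sum_shift (s : Y -> R) nu :
  \sum_y expR (s y + nu) = expR nu * \sum_y expR (s y).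
Proof. by rewrite mulr_sumr; apply: eq_bigr => y _; rewrite expRD mulrC. Qed.

Lemma S_pos (s : Y -> R) : (0 < #|Y|)%N -> 0 < \sum_y expR (s y).
Proof.
case/card_gt0P => y0 _.
rewrite (bigD1 y0) //= ltr_pwDl ?expR_gt0 //.
by apply: sumr_ge0 => i _; exact: expR_ge0.
Qed.

Lemma sum_shiftS (s : Y -> R) : (0 < #|Y|)%N ->
  \sum_y expR (s y + - ln (\sum_y expR (s y))) = 1.
Proof.
move=> hY; have Sp := S_pos s hY.
by rewrite sum_shift expRN lnK ?posrE // mulVf // gt_eqF.
Qed.

Lemma phi_max (s : Y -> R) : (0 < #|Y|)%N ->
  is_max (fun nu => Lset (@logloss R Y) (fun y => s y + nu))
         (- ln (\sum_y expR (s y))).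
Proof.
move=> hY; have Sp := S_pos s hY; split.
  by apply/Lset_char => //; rewrite sum_shiftS.
move=> w /Lset_char => /(_ hY); rewrite sum_shift => H.
rewrite -ler_expR expRN lnK ?posrE //.
by rewrite -(ler_pM2r Sp) mulVf ?gt_eqF.
Qed.

End H.

Lemma dotvB (R : realType) m (u v w : 'rV[R]_m) :
  dotv (u - v) w = dotv u w - dotv v w.
Proof.
rewrite /dotv -sumrB; apply: eq_bigr => j _.
by rewrite !mxE mulrBl.
Qed.

Lemma phi_uniq (R : realType) (X Y : finType) m (Phi : X -> Y -> 'rV[R]_m)
  (hY : (0 < #|Y|)%N) f : is_phi (@logloss R Y) Phi f ->
  forall mu x, f mu x = phi_log Phi mu x.
Proof.
move=> Hf mu x; have [H1 H2] := Hf mu x.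
have [H3 H4] := @phi_max R Y (fun y => dotv (Phi x y) mu) hY.
apply/le_anti; rewrite (H2 _ H3).
by rewrite (H4 _ H1).
Qed.

Theorem corollary8 (R : realType) (X Y : finType) (m n : nat)
  (Phi : X -> Y -> 'rV[R]_m) (a b : 'rV[R]_m) (xs : 'I_n -> X)
  (hX : (0 < #|X|)%N) (hY : (0 < #|Y|)%N) (hn : (0 < n)%N) :
  (* phi_{l_log} = phi_log *)
  is_phi (@logloss R Y) Phi (phi_log Phi) /\
  (* hence P_{x,l_log} and P_{x,log} have the same objective *)
  (forall f, is_phi (@logloss R Y) Phi f ->
     forall mu eta, objective xs a b f mu eta = objective xs a b (phi_log Phi) mu eta) /\
  (* characterization of the log-MRC condition at a solution *)
  (forall mus etas, is_solution xs a b (phi_log Phi) mus etas ->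
   forall f, is_phi (@logloss R Y) Phi f ->
   forall h : X -> Y -> R, is_rule h ->
     ((forall x y,
        (logloss (h x) y + (dotv (Phi x y) mus + f mus x)%:E <= 0)%E) <->
      (forall x y,
        h x y = expR (dotv (Phi x y) mus + phi_log Phi mus x) /\
        h x y = (\sum_(i : Y) expR (dotv (Phi x i - Phi x y) mus))^-1))).
Proof.
have P1 : is_phi (@logloss R Y) Phi (phi_log Phi).
  by move=> mu x; exact: (@phi_max R Y (fun y => dotv (Phi x y) mu) hY).
split; first exact: P1.
split.
  move=> f Hf mu eta; rewrite /objective; congr (_ - _ * _).
  by apply: eq_bigr => i _; rewrite (@phi_uniq _ _ _ _ _ hY _ Hf).
move=> mus etas _ f Hf h Hh.
have Hsum : forall x, \sum_y expR (dotv (Phi x y) mus + phi_log Phi mus x) = 1.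
  by move=> x; rewrite /phi_log sum_shiftS.
have Heq2 : forall x y, expR (dotv (Phi x y) mus + phi_log Phi mus x) =
    (\sum_(i : Y) expR (dotv (Phi x i - Phi x y) mus))^-1.
  move=> x y; have Sp := @S_pos R Y (fun y => dotv (Phi x y) mus) hY.
  rewrite /phi_log expRD expRN lnK ?posrE //.
  have -> : \sum_(i : Y) expR (dotv (Phi x i - Phi x y) mus) =
      \sum_(i : Y) expR (dotv (Phi x i) mus) / expR (dotv (Phi x y) mus).
    apply: eq_bigr => i _; rewrite -expRB; congr expR.
    rewrite /dotv -sumrB; apply: eq_bigr => j _.
    by rewrite !mxE mulrBl.
  by rewrite -mulr_suml invfM invrK mulrC.
split.
  move=> H x; case: (Hh x) => h0 h1.
  have Hle : forall y, expR (dotv (Phi x y) mus + phi_log Phi mus x) <= h x y.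
    move=> y; have := H x y; rewrite (@phi_uniq _ _ _ _ _ hY _ Hf) addeC.
    by move=> /(@pt_char R Y _ _ _ (h0 y)) [].
  have Z : \sum_y (h x y - expR (dotv (Phi x y) mus + phi_log Phi mus x)) = 0.
    by rewrite sumrB h1 Hsum subrr.
  have Hz := @psumr_eq0P R Y xpredT
    (fun y => h x y - expR (dotv (Phi x y) mus + phi_log Phi mus x)).
  have Hge : forall y, xpredT y ->
    0 <= h x y - expR (dotv (Phi x y) mus + phi_log Phi mus x).
    by move=> y _; rewrite subr_ge0.
  have Z2 := Hz Hge Z.
  have Heq : forall y, h x y = expR (dotv (Phi x y) mus + phi_log Phi mus x).
    by move=> y; apply/eqP; rewrite -subr_eq0; apply/eqP; exact: Z2.
  by move=> y; split; rewrite Heq // Heq2.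
move=> H x y; rewrite addeC; apply/pt_char; first by case: (Hh x) => ->.
rewrite (@phi_uniq _ _ _ _ _ hY _ Hf) (proj1 (H x y)) expR_gt0; split => //.
Qed.
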